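(* Let $q$ be a prime power, $r\mid(q-1)$ with $r\ge3$, and $q/2\le\ell\le q-1$. The distance $d$ of the quantum Tamo–Barg code $\mathrm{CSS}(C,C)$ with parameters $q,r,\ell$ satisfies \[ d\leq\left(1-\frac{1}{r}\right)(q-\ell)+5. \]
   Context: $[n]=\{0,\dots,n-1\}$, $\mathbb{F}_q^*=\mathbb{F}_q\setminus\{0\}$. For $S\subseteq\mathbb{Z}_{\ge0}$, $\mathbb{F}_q[X]^S=\{\sum_{i\in S}a_iX^i\}$, $\mathrm{ev}(f)=(f(x))_{x\in\mathbb{F}_q^*}$. Let $S=\{i\in[\ell]:i\not\equiv r-1\pmod r\}\cup\{i\in[q-1]:i\equiv1\pmod r\}$, $C=\mathrm{ev}(\mathbb{F}_q[X]^S)\subseteq\mathbb{F}_q^{q-1}$; for $\ell\ge q/2$, $C^\perp\subseteq C$ and the quantum Tamo–Barg code is the CSS code $\mathrm{CSS}(C,C)=\mathrm{span}\{\sum_{y\in C^\perp}|x+y\rangle:x\in C\}$. Its distance is $\min\{|c|:c\in C\setminus C^\perp\}$, where $|c|$ is the Hamming weight (equivalently, the largest $d$ such that every code state can be recovered after erasing any fewer than $d$ qudits). *)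

(* Defs.v *)
From HB Require Import structures.
From mathcomp Require Import all_boot all_order all_algebra all_field.
Set Implicit Arguments. Unset Strict Implicit. Unset Printing Implicit Defensive.
Import Order.TTheory GRing.Theory Num.Theory.
Local Open Scope ring_scope.

Section TamoBarg.
Variable F : finFieldType.

Definition Fstar := {x : F | x != 0}.

Definition vec := {ffun Fstar -> F}.

Definition ev (p : {poly F}) : vec := [ffun x : Fstar => p.[val x]].

Definition hweight (c : vec) : nat := #|[set x : Fstar | c x != 0]|.

Definition inS (q r l i : nat) : bool :=
  ((i < l)%N && (i %% r != (r - 1) %% r)%N) || ((i < q - 1)%N && (i %% r == 1 %% r)%N).

Definition inTB (r l : nat) (c : vec) : Prop :=
  exists p : {poly F}, (forall i : nat, ~~ inS #|F| r l i -> p`_i = 0) /\ c = ev p.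

Definition inTBperp (r l : nat) (y : vec) : Prop :=
  forall c : vec, inTB r l c -> \sum_(x : Fstar) c x * y x = 0.
End TamoBarg.

(* Main.v *)
Require Import Defs.
From HB Require Import structures.
From mathcomp Require Import all_boot all_order all_algebra all_field.
From mathcomp Require Import zify ring lra.
Set Implicit Arguments. Unset Strict Implicit. Unset Printing Implicit Defensive.
Import Order.TTheory GRing.Theory Num.Theory.
Local Open Scope ring_scope.

Section Basics.
Variable F : finFieldType.
Local Notation Fs := (Fstar F).
Local Notation n := (#|F| - 1)%N.

Lemma card_F : #|F| = n.+1.
Proof.
have : (0 < #|F|)%N by apply/card_gt0P; exists 0.
by case: #|F| => // k _; rewrite subn1.
Qed.

Lemma card_Fs : #|{: Fs}| = n.
Proof. rewrite card_sig subn1 -(cardC1 (0:F)); apply: eq_card => x; by rewrite !inE. Qed.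

Lemma n_gt0 : (0 < n)%N.
Proof. by rewrite -card_Fs; apply/card_gt0P; exists (exist _ (1:F) (oner_neq0 F)). Qed.

Lemma pow_n (x : F) : x != 0 -> x ^+ n = 1.
Proof.
move=> nz; apply: (mulIf nz); rewrite mul1r -exprSr -card_F.
exact: expf_card.
Qed.

Lemma pow_mod (x : F) i : x != 0 -> x ^+ i = x ^+ (i %% n).
Proof.
move=> nz; by rewrite {1}(divn_eq i n) exprD mulnC exprM pow_n // expr1n mul1r.
Qed.

Lemma natr_card : (#|F|%:R : F) = 0.
Proof.
have := reindex_inj (op := +%R) (x := 0) (P := predT) (F := id) (addIr (1 : F)).
rewrite /= big_split /= sumr_const => /eqP.
by rewrite -subr_eq0 opprD addrA subrr sub0r oppr_eq0 => /eqP.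
Qed.

Definition smul (a b : Fs) : Fs :=
  exist _ (val a * val b) (mulf_neq0 (valP a) (valP b)).

Lemma smul_inj a : injective (smul a).
Proof.
move=> b c /(congr1 val) /= /(mulfI (valP a)) h; exact: val_inj.
Qed.

Lemma sum_pow i : ~~ (n %| i)%N -> \sum_(x : Fs) (val x) ^+ i = 0.
Proof.
move=> ndv.
have [a ha] : exists a : Fs, val a ^+ i != 1.
  case: (pickP (fun a : Fs => val a ^+ i != 1)) => [a ha|Hn]; first by exists a.
  exfalso.
  have all1 : forall a : Fs, val a ^+ (i %% n) = 1.
    by move=> a; rewrite -pow_mod ?(valP a) //; apply/eqP/negbFE/Hn.
  have jpos : (0 < i %% n)%N by rewrite lt0n -/(dvdn n i).
  have := @max_poly_roots F ('X^(i %% n) - 1) (map val (enum {: Fs})).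
  rewrite -size_poly_eq0 size_XnsubC // size_map -cardE card_Fs ltnS.
  rewrite leqNgt ltn_pmod ?n_gt0 // => /(_ isT) H.
  have A1 : all (root ('X^(i %% n) - 1)) [seq \val i | i <- enum {: Fs}].
    apply/allP => z /mapP [a _ ->]; rewrite /root hornerD hornerN hornerXn hornerC.
    by rewrite all1 subrr.
  have A2 : uniq [seq \val i | i <- enum {: Fs}].
    by rewrite map_inj_uniq ?enum_uniq //; apply: val_inj.
  by move: (H A1 A2).
set S := \sum_(x : Fs) _.
have E : S = val a ^+ i * S.
  rewrite /S {1}(reindex_inj (@smul_inj a)) /= mulr_sumr; apply: eq_bigr => x _.
  by rewrite exprMn.
have : (val a ^+ i - 1) * S == 0 by rewrite mulrBl mul1r -E subrr.
by rewrite mulf_eq0 subr_eq0 (negbTE ha) => /eqP.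
Qed.

Lemma sum_pow0 : \sum_(x : Fs) (val x) ^+ 0 = -1.
Proof.
under eq_bigr do rewrite expr0.
rewrite sumr_const (_ : #|_| = n); last exact: card_Fs.
have h1 : (1 <= #|F|)%N by rewrite card_F.
by rewrite natrB // natr_card sub0r.
Qed.

Lemma sum_eval (p : {poly F}) :
  (forall i, (0 < i)%N -> p`_i != 0 -> ~~ (n %| i)%N) ->
  \sum_(x : Fs) p.[val x] = - p`_0.
Proof.
move=> Hp.
rewrite (eq_bigr _ (fun x _ => horner_coef_wide (val x) (leqnSn (size p)))).
rewrite exchange_big big_ord_recl /= -mulr_sumr sum_pow0 mulrN1.
rewrite big1 ?addr0 // => i _; rewrite -mulr_sumr.
have [->|nz] := eqVneq p`_(bump 0 i) 0; first by rewrite mul0r.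
by rewrite sum_pow ?mulr0 // Hp.
Qed.

End Basics.

Local Open Scope nat_scope.
Lemma arith (q l r m K bb e W : nat) :
  (3 <= r)%N -> (r * m = q - 1)%N -> (2 <= q)%N -> (l - 1 = K * r + bb)%N -> (bb < r)%N ->
  (1 <= l)%N -> (l <= q - 1)%N -> (K < m)%N ->
  (e = bb \/ (e = r - 2 /\ bb = r - 1)) ->
  (W + e <= (r - 1) * (m - K) + 1)%N ->
  (r * W <= (r - 1) * (q - l) + 5 * r)%N.
Proof.
move=> r3 hm q2 hl hb l1 lq Km he hW.
have H2 : (r * (m - K) = q - l + bb)%N by rewrite mulnBr; lia.
have H1 : (r * W + r * e <= (r - 1) * (r * (m - K)) + r)%N.
  have := leq_mul (leqnn r) hW; rewrite !mulnDr muln1 mulnCA; lia.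
rewrite H2 mulnDr in H1.
case: he => [ee|[ee eb]]; subst.
  have : ((r - 1) * bb <= r * bb)%N by rewrite leq_mul2r leq_subr orbT.
  lia.
have : ((r - 1) * (r - 1) + r <= r * (r - 2) + 5 * r)%N.
  clear -r3; move: r3; case: r => [|[|[|t]]] // _.
  rewrite !subSS !subn0 /=; nia.
lia.
Qed.
Local Open Scope ring_scope.


Section Main.
Variables (F : finFieldType) (r l : nat).
Hypotheses (hr : (r %| #|F| - 1)%N) (r3 : (3 <= r)%N) (hl1 : (#|F| <= 2 * l)%N)
  (hl2 : (l <= #|F| - 1)%N).
Local Notation Fs := (Fstar F).
Local Notation n := (#|F| - 1)%N.
Let m := (n %/ r)%N.

Lemma r_gt0 : (0 < r)%N. Proof. by apply: leq_trans r3. Qed.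
Lemma rm : (r * m = n)%N. Proof. by rewrite /m mulnC divnK. Qed.
Lemma m_gt0 : (0 < m)%N.
Proof. have := n_gt0 F; rewrite -rm; case: m => //; by rewrite muln0. Qed.

Definition fib (y : F) : {set Fs} := [set x : Fs | val x ^+ r == y].
Definition Hs : {set F} := [set val x ^+ r | x : Fs].
Definition mu := fib 1.

Definition sinv (a : Fs) : Fs := exist _ (val a)^-1 (invr_neq0 (valP a)).

Lemma fib_card (x0 : Fs) : #|fib (val x0 ^+ r)| = #|mu|.
Proof.
apply/eqP; rewrite eqn_leq; apply/andP; split.
- rewrite -(card_imset _ (@smul_inj _ (sinv x0))); apply: subset_leq_card.
  apply/subsetP => z /imsetP [x xin ->]; rewrite !inE /= exprMn exprVn.
  move: xin; rewrite inE => /eqP ->.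
  by rewrite mulVf // expf_neq0 // (valP x0).
- rewrite -(card_imset _ (@smul_inj _ x0)); apply: subset_leq_card.
  apply/subsetP => z /imsetP [x xin ->]; rewrite !inE /= exprMn.
  by move: xin; rewrite inE => /eqP ->; rewrite mulr1.
Qed.

Lemma mu_le : (#|mu| <= r)%N.
Proof.
have := @max_poly_roots F ('X^r - 1) (map val (enum mu)).
rewrite -size_poly_eq0 size_XnsubC ?r_gt0 // size_map -cardE ltnS => /(_ isT); apply.
  apply/allP => z /mapP [a]; rewrite mem_enum inE => /eqP ha ->.
  by rewrite /root hornerD hornerN hornerXn hornerC ha subrr.
by rewrite map_inj_uniq ?enum_uniq //; apply: val_inj.
Qed.

Lemma Hs_le : (#|Hs| <= m)%N.
Proof.
have := @max_poly_roots F ('X^m - 1) (enum Hs).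
rewrite -size_poly_eq0 size_XnsubC ?m_gt0 // -cardE ltnS => /(_ isT); apply.
  apply/allP => z; rewrite mem_enum => /imsetP [x _ ->].
  by rewrite /root hornerD hornerN hornerXn hornerC -exprM rm pow_n ?(valP x) // subrr.
exact: enum_uniq.
Qed.

Lemma n_part : n = (#|Hs| * #|mu|)%N.
Proof.
rewrite -card_Fs -[LHS]sum1_card (partition_big (fun x : Fs => val x ^+ r) (mem Hs)) /=.
  rewrite (eq_bigr (fun _ => #|mu|)); first by rewrite sum_nat_const.
  move=> y /imsetP [x0 _ ->]; rewrite sum1_card -(fib_card x0).
  by apply: eq_card => x; rewrite inE.
by move=> x _; apply: imset_f.
Qed.

Lemma mu_r : #|mu| = r.
Proof.
have := n_part; have := mu_le; have := Hs_le; have := rm; have := m_gt0. nia.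
Qed.

Lemma Hs_m : #|Hs| = m.
Proof.
have := n_part; have := mu_le; have := Hs_le; have := rm; have := m_gt0; have := r_gt0. nia.
Qed.

Lemma fib_r y : y \in Hs -> #|fib y| = r.
Proof. by move=> /imsetP [x0 _ ->]; rewrite fib_card mu_r. Qed.


Lemma l_ge1 : (1 <= l)%N.
Proof. have := n_gt0 F; lia. Qed.

Definition K := ((l - 1) %/ r)%N.
Definition bb := ((l - 1) %% r)%N.
Definition e := minn bb (r - 2).

Lemma rK_le : (r * K + e <= l - 1)%N.
Proof.
have := divn_eq (l - 1) r; rewrite -/K -/bb => h.
have : (e <= bb)%N by rewrite geq_minl.
lia.
Qed.

Lemma K_lt_m : (K < m)%N.
Proof.
have := rK_le; have := rm; have := l_ge1; have := r_gt0; nia.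
Qed.

Lemma e_le : (e <= r - 2)%N.
Proof. by rewrite geq_minr. Qed.

Definition s := enum Hs.
Definition gs := take K s.
Definition y0 := nth 0 s K.

Lemma size_s : size s = m.
Proof. by rewrite /s -cardE Hs_m. Qed.

Lemma y0_in : y0 \in Hs.
Proof. by rewrite -mem_enum mem_nth // -/s size_s K_lt_m. Qed.

Lemma gs_sub y : y \in gs -> y \in Hs.
Proof. by move/mem_take; rewrite mem_enum. Qed.

Lemma y0_notin : y0 \notin gs.
Proof.
apply/negP => yin.
have := index_uniq 0 (_ : (K < size s)%N) (enum_uniq (mem Hs)).
rewrite size_s => /(_ K_lt_m); rewrite -/s -/y0.
rewrite -{1}(cat_take_drop K s) index_cat -/gs yin.
have := index_mem y0 gs; rewrite yin size_take size_s K_lt_m.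
move=> h1 h2; by rewrite h2 ltnn in h1.
Qed.

Lemma card_gs : #|[set y in gs]| = K.
Proof.
have /card_uniqP u : uniq gs by rewrite take_uniq // enum_uniq.
by rewrite cardsE u size_take size_s K_lt_m.
Qed.

Lemma Hs_neq0 y : y \in Hs -> y != 0.
Proof. by move=> /imsetP [x _ ->]; rewrite expf_neq0 // (valP x). Qed.

Definition G : {poly F} := \prod_(y <- gs) ('X - y%:P).
Definition Es : seq Fs := take e (enum (fib y0)).
Definition hs := map val Es.
Definition h : {poly F} := \prod_(z <- hs) ('X - z%:P).
Definition rep (y : F) : F :=
  if [pick x : Fs | val x ^+ r == y] is Some x then val x else 1.
Definition v (y : F) : F := if y == y0 then 0 else - (G.[y] * h.[rep y] / rep y).
Definition V : {poly F} := \sum_(y : F) v y *: (1 - ('X - y%:P) ^+ n).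
Definition A := (G \Po 'X^r) * h.
Definition B := 'X * (V \Po 'X^r).
Definition P := A + B.

Lemma size_Es : size Es = e.
Proof.
rewrite size_take -cardE fib_r ?y0_in //.
have h1 := e_le; have h2 := r3.
have -> : (e < r)%N by apply: leq_ltn_trans h1 _; rewrite ltn_subrL; apply/andP; split; [|apply: leq_trans h2].
by [].
Qed.

Lemma card_Es : #|[set x in Es]| = e.
Proof.
have /card_uniqP u : uniq Es by rewrite take_uniq // enum_uniq.
by rewrite cardsE u size_Es.
Qed.

Lemma Es_sub x : x \in Es -> x \in fib y0.
Proof. by move/mem_take; rewrite mem_enum. Qed.

Lemma rep_spec y : y \in Hs -> exists2 xr : Fs, val xr ^+ r = y & rep y = val xr.
Proof.
move=> /imsetP [x1 _ ->]; rewrite /rep.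
case: pickP => [xr /eqP hxr | none]; first by exists xr.
by have := none x1; rewrite eqxx.
Qed.

Lemma V_eval y : V.[y] = v y.
Proof.
rewrite /V horner_sum (bigD1 y) //= big1 ?addr0.
  by rewrite hornerZ !hornerE subrr expr0n /= eqn0Ngt n_gt0 subr0 mulr1.
move=> z nz; rewrite hornerZ !hornerE pow_n ?subrr ?mulr0 //.
by rewrite subr_eq0 eq_sym.
Qed.

Lemma P_eval x : P.[x] = G.[x ^+ r] * h.[x] + x * v (x ^+ r).
Proof.
by rewrite /P /A /B hornerD hornerM horner_comp hornerXn hornerM hornerX horner_comp
  hornerXn V_eval.
Qed.


Definition cnt (y : F) := #|[set x in fib y | ev P x != 0]|.

Lemma fiber_bound y : y \in Hs ->
  (cnt y + e * (y == y0) <= (r - 1) * (y \notin gs) + (y == y0))%N.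
Proof.
move=> yH.
case: (boolP (y \in gs)) => yg.
  have ny0 : y != y0 by apply: contraNneq y0_notin => <-.
  rewrite (negbTE ny0) /= !muln0 !addn0 leqn0 /cnt cards_eq0; apply/eqP/setP => x.
  rewrite !inE; apply/negbTE; rewrite negb_and negbK.
  case: (eqVneq (val x ^+ r) y) => //= xy.
  have Gy : G.[y] = 0 by apply/rootP; rewrite root_prod_XsubC.
  rewrite ffunE P_eval xy /v; case: ifP => [/eqP E|_]; first by rewrite E eqxx in ny0.
  by rewrite Gy !mul0r oppr0 mulr0 addr0.
case: (eqVneq y y0) => [->|ny0].
  rewrite muln1 muln1 /cnt.
  have sub : [set x in fib y0 | ev P x != 0] \subset fib y0 :\: [set x in Es].
    apply/subsetP => x; rewrite !inE => /andP [xf cx]; rewrite xf andbT.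
    apply: contra cx => xE.
    have hx : h.[val x] = 0 by apply/rootP; rewrite root_prod_XsubC map_f.
    by rewrite ffunE P_eval hx (eqP xf) /v eqxx mulr0 mulr0 addr0.
  have := subset_leq_card sub.
  rewrite cardsD (setIidPr _); last by apply/subsetP => x; rewrite inE; apply: Es_sub.
  rewrite card_Es fib_r ?y0_in //.
  have := e_le; have := r3; lia.
rewrite /= muln0 addn0 muln1 addn0 /cnt.
have [xr xry repy] := rep_spec yH.
have sub : [set x in fib y | ev P x != 0] \subset fib y :\ xr.
  apply/subsetP => x; rewrite !inE => /andP [xf cx]; rewrite xf andbT.
  apply: contra cx => /eqP ->.
  rewrite ffunE P_eval xry /v; case: ifP => [/eqP E|_]; first by rewrite E eqxx in ny0.
  rewrite repy mulrN (mulrC (val xr)) divfK ?subrr //.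
  exact: (valP xr).
have := subset_leq_card sub.
have := cardsD1 xr (fib y); rewrite fib_r // inE xry eqxx /=.
by move=> ->; rewrite addKn.
Qed.


Lemma weight_part : hweight (ev P) = (\sum_(y in Hs) cnt y)%N.
Proof.
rewrite /hweight -sum1_card (partition_big (fun x : Fs => val x ^+ r) (mem Hs)) /=.
  apply: eq_bigr => y _; rewrite sum1_card /cnt; apply: eq_card => x.
  by rewrite unfold_in /= !inE andbC.
by move=> x _; apply: imset_f.
Qed.

Lemma weight_bound : (hweight (ev P) + e <= (r - 1) * (m - K) + 1)%N.
Proof.
have E1 : (\sum_(y in Hs) e * (y == y0) = e)%N.
  rewrite (bigD1 y0) ?y0_in //= eqxx muln1 big1 ?addn0 // => y /andP [_ ny].
  by rewrite (negbTE ny) muln0.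
have E2 : (\sum_(y in Hs) (y == y0) = 1)%N.
  rewrite (bigD1 y0) ?y0_in //= eqxx big1 ?addn0 // => y /andP [_ ny].
  by rewrite (negbTE ny).
have E3 : (\sum_(y in Hs) (y \notin gs) = #|Hs :\: [set y in gs]|)%N.
  rewrite -sum1_card big_mkcond [in RHS]big_mkcond /=; apply: eq_bigr => y _.
  by rewrite !inE; case: (y \in gs); case: (y \in Hs).
have E4 : #|Hs :\: [set y in gs]| = (m - K)%N.
  rewrite cardsD (setIidPr _) ?card_gs ?Hs_m //.
  by apply/subsetP => y; rewrite inE; apply: gs_sub.
rewrite weight_part -E1 -big_split /=.
apply: (@leq_trans (\sum_(y in Hs) ((r - 1) * (y \notin gs) + (y == y0)))%N).
  by apply: leq_sum => y yH; apply: fiber_bound.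
rewrite big_split /= -big_distrr /= E2 E3 E4 //.
Qed.


Definition good i :=
  ((i < l)%N && (i %% r != (r - 1) %% r)%N) || (i %% r == 1 %% r)%N.

Lemma inTB_of (p : {poly F}) : (forall i, p`_i != 0 -> good i) -> inTB r l (ev p).
Proof.
move=> Hp; exists (\sum_(i < size p) p`_i *: 'X^(i %% n)%N); split.
  move=> j hj; rewrite coef_sum big1 // => i _; rewrite coefZ coefXn.
  case: (eqVneq j (i %% n)%N) => [ej|]; last by rewrite mulr0.
  have [->|nz] := eqVneq p`_i 0; first by rewrite mul0r.
  exfalso; move: hj; rewrite ej /inS; have := Hp _ nz; rewrite /good.
  case/orP => [/andP [il ir]| ir1].
    by rewrite modn_small ?il ?ir //; apply: leq_trans il hl2.
  by rewrite (modn_dvdm _ hr) ir1 ltn_pmod ?orbT // n_gt0.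
apply/ffunP => x; rewrite !ffunE horner_sum (horner_coef p); apply: eq_bigr => i _.
by rewrite hornerZ hornerXn -pow_mod // (valP x).
Qed.

Lemma size_G : size G = K.+1.
Proof. by rewrite size_prod_XsubC size_take size_s K_lt_m. Qed.

Lemma size_h : size h = e.+1.
Proof. by rewrite size_prod_XsubC size_map size_Es. Qed.

Lemma A_good i : A`_i != 0 -> (i < l)%N && (i %% r != (r - 1) %% r)%N.
Proof.
rewrite /A coefM => nz.
have [j hj] : exists j : 'I_i.+1, (G \Po 'X^r)`_j * h`_(i - j) != 0.
  case: (pickP (fun j : 'I_i.+1 => (G \Po 'X^r)`_j * h`_(i - j) != 0)) => [j hj|none].
    by exists j.
  by move: nz; rewrite big1 ?eqxx // => j _; apply/eqP/negbFE/none.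
move: hj; rewrite mulf_eq0 negb_or => /andP [Gj hj].
move: Gj; rewrite (coef_comp_poly_Xn G j r_gt0); case: ifP => [dj Gj|]; last by rewrite eqxx.
have jK : (j %/ r <= K)%N.
  rewrite leqNgt; apply: contra Gj => lt; apply/eqP; apply: nth_default.
  by rewrite size_G.
have ie : (i - j <= e)%N.
  rewrite leqNgt; apply: contra hj => lt; apply/eqP; apply: nth_default.
  by rewrite size_h.
have ji : (j <= i)%N by rewrite -ltnS ltn_ord.
have jr : (j %/ r * r = j)%N by rewrite divnK.
have jrK : (j %/ r * r <= K * r)%N by rewrite leq_mul2r jK orbT.
have := rK_le; have := l_ge1; have := e_le; have := r3.
move: jr jrK; set t := (j %/ r)%N => jr jrK r3' ele l1 rke.
apply/andP; split; first by rewrite mulnC in rke; lia.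
have -> : i = (i - j + t * r)%N by lia.
rewrite addnC modnMDl !modn_small; try lia.
Qed.

Lemma B_good i : B`_i != 0 -> (i %% r == 1 %% r)%N.
Proof.
rewrite /B coefXM; case: ifP => [_|/negbT i0]; first by rewrite eqxx.
rewrite coef_comp_poly_Xn ?r_gt0 //; case: ifP => [d _|]; last by rewrite eqxx.
by rewrite -(prednK (_ : 0 < i)%N) ?lt0n // -addn1 -(divnK d) modnMDl.
Qed.

Lemma P_good i : P`_i != 0 -> good i.
Proof.
rewrite /P coefD /good.
have [Az|Anz] := eqVneq A`_i 0.
  by rewrite Az add0r => /B_good ->; rewrite orbT.
by rewrite (A_good Anz).
Qed.

Lemma inTB_P : inTB r l (ev P).
Proof. exact: inTB_of P_good. Qed.

Lemma inTB_1 : inTB r l (ev (1 : {poly F})).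
Proof.
apply: inTB_of => i; rewrite coef1; have [->|ni] := eqVneq i 0%N; last by rewrite eqxx.
move=> _; rewrite /good mod0n l_ge1 /= modn_small; last by have := r3; lia.
have := r3; clear; case: r => [|[|k]] //.
Qed.

Lemma P0_neq0 : P`_0 != 0.
Proof.
rewrite /P coefD /B coefXM eqxx addr0 -horner_coef0 /A hornerM horner_comp hornerXn.
rewrite expr0n eqn0Ngt r_gt0 /= mulf_neq0 //.
  rewrite -/(root G 0) root_prod_XsubC; apply/negP => /gs_sub /Hs_neq0.
  by rewrite eqxx.
rewrite -/(root h 0) root_prod_XsubC; apply/negP => /mapP [x _ x0].
by have := valP x; rewrite -x0 eqxx.
Qed.

Lemma not_perp : ~ inTBperp r l (ev P).
Proof.
move=> Hp; have := Hp _ inTB_1.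
under eq_bigr do rewrite !ffunE (_ : 1.[_] = 1) ?mul1r ?hornerC //.
rewrite sum_eval; first by move/eqP; rewrite oppr_eq0 (negbTE P0_neq0).
move=> i i0 nz; have := P_good nz; rewrite /good.
case/orP => [/andP [il _]|ir].
  by apply/negP => /(dvdn_leq i0); rewrite leqNgt (leq_trans il hl2).
apply/negP => /(dvdn_trans hr); rewrite /dvdn (eqP ir) modn_small //.
by have := r3; lia.
Qed.

Lemma main_sec : exists c : vec F,
    [/\ inTB r l c, ~ inTBperp r l c &
        (hweight c)%:R <= (1 - 1 / r%:R) * (#|F| - l)%:R + 5 :> rat].
Proof.
exists (ev P); split; [exact: inTB_P | exact: not_perp |].
have hN : (r * hweight (ev P) <= (r - 1) * (#|F| - l) + 5 * r)%N.
  apply: (@arith _ _ _ m K bb e) => //.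
  - by rewrite rm.
  - by have := n_gt0 F; lia.
  - exact: divn_eq.
  - by rewrite ltn_pmod ?r_gt0.
  - exact: l_ge1.
  - exact: K_lt_m.
  - rewrite /e /minn; case: ltnP => hb; first by left.
    have := ltn_pmod (l - 1) r_gt0; rewrite -/bb => hbr.
    have [eb|nb] := eqVneq bb (r - 2)%N; first by left.
    right; split => //; move/eqP: nb; lia.
  - exact: weight_bound.
have rpos : (0 : rat) < r%:R by rewrite ltr0n r_gt0.
rewrite -(ler_pM2l rpos).
have -> : r%:R * ((1 - 1 / r%:R) * (#|F| - l)%:R + 5) =
    ((r - 1) * (#|F| - l) + 5 * r)%:R :> rat.
  rewrite natrD !natrM (@natrB _ r 1) ?r_gt0 //; field.
  by rewrite pnatr_eq0 -lt0n r_gt0.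
by rewrite -natrM ler_nat.
Qed.

End Main.

Theorem corollary6p1 (F : finFieldType) (r l : nat) :
  (r %| #|F| - 1)%N -> (3 <= r)%N -> (#|F| <= 2 * l)%N -> (l <= #|F| - 1)%N ->
  exists c : vec F,
    [/\ inTB r l c, ~ inTBperp r l c &
        (hweight c)%:R <= (1 - 1 / r%:R) * (#|F| - l)%:R + 5 :> rat].
Proof. move=> h1 h2 h3 h4; exact: main_sec. Qed.
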